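(* Let $u\equiv 7,11\pmod{12}$. Then $\Phi(u\times 2,4,2)\le\left\lfloor\frac{u}{4}\left\lfloor\frac{2u-1}{3}\left\lfloor\frac{2u-2}{2}\right\rfloor\right\rfloor\right\rfloor-1$.
   Context: A 2-D $(u\times v,4,2)$-OOC is a family $\mathcal C$ of $u\times v$ $(0,1)$-matrices of Hamming weight $4$ such that for all $A=(a_{ij}),B=(b_{ij})\in\mathcal C$ and integers $r$ with $A\ne B$ or $r\not\equiv0\pmod v$, $\sum_{i,j}a_{ij}b_{i,j+r}\le 2$ (column indices mod $v$). $\Phi(u\times v,4,2)$ is the largest size of such a code. *)

(* Defs.v *)
From mathcomp Require Import all_boot all_order all_algebra.
Set Implicit Arguments. Unset Strict Implicit. Unset Printing Implicit Defensive.

Definition cshift (v : nat) (j r : 'I_v) : 'I_v :=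
  Ordinal (ltn_pmod (j + r) (leq_ltn_trans (leq0n j) (ltn_ord j))).

Definition mweight (u v : nat) (A : 'M[bool]_(u, v)) : nat :=
  \sum_(i < u) \sum_(j < v) (A i j : nat).

Definition mcorr (u v : nat) (A B : 'M[bool]_(u, v)) (r : 'I_v) : nat :=
  \sum_(i < u) \sum_(j < v) ((A i j && B i (cshift j r)) : nat).

Definition is_OOC (u v w lam : nat) (C : {set 'M[bool]_(u, v)}) : bool :=
  [forall A in C, mweight A == w] &&
  [forall A in C, forall B in C, forall r : 'I_v,
     ((A != B) || (nat_of_ord r != 0%N)) ==> (mcorr A B r <= lam)].

Definition Phi (u v w lam : nat) : nat :=
  \max_(C : {set 'M[bool]_(u, v)} | is_OOC w lam C) #|C|.

(* Main.v *)
Require Import Defs.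
From mathcomp Require Import all_boot all_order all_algebra zify.
Set Implicit Arguments. Unset Strict Implicit. Unset Printing Implicit Defensive.


Lemma disjD (T : finType) (Y B Q : {set T}) : Y \subset B :\: Q -> Y :&: Q = set0.
Proof.
move=> H; apply/setP => x; rewrite !inE; apply/negbTE/negP => /andP[xY xQ].
by move: (subsetP H x xY); rewrite inE xQ.
Qed.

Lemma card_sup (T : finType) (Q B : {set T}) n : Q \subset B -> #|Q| <= n ->
  #|[set X : {set T} | (Q \subset X) && (X \subset B) && (#|X| == n)]|
  = 'C(#|B :\: Q|, n - #|Q|).
Proof.
move=> QB Qn.
rewrite -cards_draws.
have -> : [set X : {set T} | (Q \subset X) && (X \subset B) && (#|X| == n)]
   = (fun Y : {set T} => Y :|: Q) @: [set Y : {set T} | Y \subset B :\: Q & #|Y| == n - #|Q|].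
  apply/setP => X; rewrite inE; apply/idP/imsetP.
  - case/andP => /andP[QX XB] /eqP cX; exists (X :\: Q).
      rewrite inE; apply/andP; split; first exact: setSD.
      by rewrite cardsD (setIidPr QX) cX.
    apply/setP => x; rewrite !inE; case: (boolP (x \in Q)) => xQ /=.
      by rewrite (subsetP QX x xQ).
    by rewrite orbF.
  - case=> Y; rewrite inE => /andP[YB /eqP cY] ->.
    have YB' : Y \subset B by apply: subset_trans YB (subsetDl _ _).
    rewrite subsetUr subUset YB' QB /= cardsU (disjD YB) cards0 cY.
    by apply/eqP; lia.
rewrite card_in_imset //.
move=> Y1 Y2; rewrite !inE => /andP[H1 _] /andP[H2 _] E.
apply/setP => x.
have := congr1 (fun Z : {set T} => x \in Z) E; rewrite !inE /=.
case: (boolP (x \in Q)) => xQ; last by rewrite !orbF.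
have /setP/(_ x) := disjD H1; have /setP/(_ x) := disjD H2.
by rewrite !inE xQ !andbT => -> ->.
Qed.

Section Main.
Variable u : nat.
Local Notation P := ('I_u * 'I_2)%type.
Definition one2 : 'I_2 := @Ordinal 2 1 isT.
Definition zero2 : 'I_2 := @Ordinal 2 0 isT.
Definition sw (j : 'I_2) : 'I_2 := cshift j one2.
Lemma swK : involutive sw.
Proof. by case=> [[|[|m]] Hm]; apply: val_inj. Qed.
Lemma sw_neq j : sw j != j.
Proof. by case: j => [[|[|m]] Hm]. Qed.
Lemma cshift0 (j : 'I_2) : cshift j zero2 = j.
Proof. by case: j => [[|[|m]] Hm]; apply: val_inj. Qed.
Definition sg (p : P) : P := (p.1, sw p.2).
Lemma sgK : involutive sg.
Proof. by case=> i j; rewrite /sg /= swK. Qed.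
Lemma sg_neq p : sg p != p.
Proof. case: p => i j; rewrite /sg /= xpair_eqE eqxx /=; exact: sw_neq. Qed.
Lemma sg_inj : injective sg. Proof. exact: inv_inj sgK. Qed.

Definition supp (A : 'M[bool]_(u,2)) : {set P} := [set p | A p.1 p.2].
Definition suppS (A : 'M[bool]_(u,2)) : {set P} := [set p | A p.1 (sw p.2)].
Lemma suppS_pre A : suppS A = sg @^-1: supp A.
Proof. by apply/setP => p; rewrite !inE. Qed.

Lemma sum_card (f : 'I_u -> 'I_2 -> bool) :
  \sum_(i < u) \sum_(j < 2) (f i j : nat) = #|[set p : P | f p.1 p.2]|.
Proof.
rewrite pair_big /= -sum1_card [in RHS]big_mkcond /=.
by apply: eq_bigr => p _; rewrite inE; case: (f _ _).
Qed.

Lemma mweightE A : mweight A = #|supp A|.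
Proof. by rewrite /mweight sum_card. Qed.
Lemma mcorr0 A B : mcorr A B zero2 = #|supp A :&: supp B|.
Proof. by rewrite /mcorr sum_card; apply: eq_card => p; rewrite !inE cshift0. Qed.
Lemma mcorr1 A B : mcorr A B one2 = #|supp A :&: suppS B|.
Proof. by rewrite /mcorr sum_card; apply: eq_card => p; rewrite !inE. Qed.
Lemma supp_inj : injective supp.
Proof.
move=> A B E; apply/matrixP => i j.
by have := congr1 (fun S : {set P} => (i,j) \in S) E; rewrite !inE.
Qed.

Variable C : {set 'M[bool]_(u,2)}.
Hypothesis HC : is_OOC 4 2 C.

Lemma H4 A : A \in C -> #|supp A| = 4.
Proof.
move: HC => /andP[/forall_inP H _] AC.
by have /eqP := H A AC; rewrite mweightE.
Qed.
Lemma H4S A : A \in C -> #|suppS A| = 4.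
Proof. by move=> AC; rewrite suppS_pre card_preimset ?H4 //; exact: sg_inj. Qed.
Lemma H0 A B : A \in C -> B \in C -> A != B -> #|supp A :&: supp B| <= 2.
Proof.
move: HC => /andP[_ /forall_inP H] AC BC AB.
have /forall_inP/(_ B BC)/forallP/(_ zero2)/implyP := H A AC.
by rewrite AB mcorr0 => ->.
Qed.
Lemma H1 A B : A \in C -> B \in C -> #|supp A :&: suppS B| <= 2.
Proof.
move: HC => /andP[_ /forall_inP H] AC BC.
have /forall_inP/(_ B BC)/forallP/(_ one2)/implyP := H A AC.
by rewrite orbT mcorr1 => ->.
Qed.
Lemma H0S A B : A \in C -> B \in C -> A != B -> #|suppS A :&: suppS B| <= 2.
Proof.
move=> AC BC AB; rewrite !suppS_pre -preimsetI card_preimset; last exact: sg_inj.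
exact: H0.
Qed.


Lemma inter3 (X Y T : {set P}) : T \subset X -> T \subset Y -> #|T| = 3 -> 3 <= #|X :&: Y|.
Proof. move=> TX TY cT; rewrite -cT; apply: subset_leq_card; by rewrite subsetI TX TY. Qed.

Definition cov (T : {set P}) :=
  #|[set A in C | T \subset supp A]| + #|[set A in C | T \subset suppS A]|.

Lemma cov_le1 (T : {set P}) : #|T| = 3 -> cov T <= 1.
Proof.
move=> cT; rewrite /cov.
set X1 := [set A in C | T \subset supp A]; set X2 := [set A in C | T \subset suppS A].
have h1 : #|X1| <= 1.
  apply/card_le1_eqP => A B; rewrite !inE => /andP[AC TA] /andP[BC TB].
  apply/eqP; apply/negPn/negP => AB.
  have := H0 BC AC AB; rewrite setIC; have := inter3 TA TB cT; lia.
have h2 : #|X2| <= 1.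
  apply/card_le1_eqP => A B; rewrite !inE => /andP[AC TA] /andP[BC TB].
  apply/eqP; apply/negPn/negP => AB.
  have := H0S BC AC AB; rewrite setIC; have := inter3 TA TB cT; lia.
case: (posnP #|X1|) => [->|]; first by [].
rewrite card_gt0 => /set0Pn [A]; rewrite inE => /andP[AC TA].
suff -> : #|X2| = 0 by rewrite addn0.
apply/eqP; rewrite cards_eq0; apply/eqP/setP => B; rewrite !inE.
apply/negbTE/negP => /andP[BC TB].
have := H1 AC BC; have := inter3 TA TB cT; lia.
Qed.

Lemma card_sum (T : finType) (D : {set T}) (Pr : pred T) :
  #|[set x in D | Pr x]| = \sum_(x in D) (Pr x : nat).
Proof.
rewrite -sum1_card (eq_bigl (fun x => (x \in D) && Pr x)); last by move=> x; rewrite inE.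
by rewrite big_mkcondr /=; apply: eq_bigr => x _; case: (Pr x).
Qed.

Lemma dc (S : {set {set P}}) (g : 'M[bool]_(u,2) -> {set P}) :
  \sum_(T in S) #|[set A in C | T \subset g A]| = \sum_(A in C) #|[set T in S | T \subset g A]|.
Proof.
rewrite (eq_bigr (fun T : {set P} => \sum_(A in C) (T \subset g A : nat))); last by move=> T _; rewrite card_sum.
rewrite exchange_big; apply: eq_bigr => A _; by rewrite card_sum.
Qed.

Definition SQ (Q : {set P}) :=
  [set T : {set P} | (Q \subset T) && (T \subset [set: P]) && (#|T| == 3)].

Lemma per_block (Q X : {set P}) : #|Q| <= 3 -> #|X| = 4 ->
  #|[set T in SQ Q | T \subset X]| = (Q \subset X) * 'C(4 - #|Q|, 3 - #|Q|).
Proof.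
move=> cQ cX; case: (boolP (Q \subset X)) => QX.
  have e : 4 - #|Q| = #|X :\: Q| by rewrite cardsD (setIidPr QX) cX.
  rewrite mul1n e -card_sup //.
  apply: eq_card => T; rewrite !inE subsetT /=.
  by case: (Q \subset T); case: (T \subset X); case: (#|T| == 3).
rewrite /nat_of_bool mul0n; apply/eqP; rewrite cards_eq0; apply/eqP/setP => T; rewrite !inE.
apply/negbTE/negP => /andP[/andP[/andP[QT _] _] TX].
by move: QX; rewrite (subset_trans QT TX).
Qed.

Lemma sum_cov (Q : {set P}) : #|Q| <= 3 ->
  \sum_(T in SQ Q) cov T = 'C(4 - #|Q|, 3 - #|Q|) *
     (#|[set A in C | Q \subset supp A]| + #|[set A in C | Q \subset suppS A]|).
Proof.
move=> cQ; rewrite /cov big_split /= !dc mulnDr.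
congr (_ + _).
  rewrite (eq_bigr (fun A => (Q \subset supp A) * 'C(4 - #|Q|, 3 - #|Q|))).
    by rewrite -big_distrl /= -card_sum mulnC.
  by move=> A AC; rewrite per_block // H4.
rewrite (eq_bigr (fun A => (Q \subset suppS A) * 'C(4 - #|Q|, 3 - #|Q|))).
  by rewrite -big_distrl /= -card_sum mulnC.
by move=> A AC; rewrite per_block // H4S.
Qed.

Definition UQ (Q : {set P}) := [set T : {set P} | (Q \subset T) && (#|T| == 3) && (cov T == 0)].

Lemma main_eq (Q : {set P}) : #|Q| <= 3 ->
  'C(u * 2 - #|Q|, 3 - #|Q|) = #|UQ Q| + 'C(4 - #|Q|, 3 - #|Q|) *
     (#|[set A in C | Q \subset supp A]| + #|[set A in C | Q \subset suppS A]|).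
Proof.
move=> cQ; rewrite -sum_cov //.
have -> : u * 2 - #|Q| = #|[set: P] :\: Q|.
  by rewrite cardsD setTI cardsT card_prod !card_ord.
rewrite -card_sup ?subsetT //.
rewrite -[LHS]/(#|SQ Q|) -sum1_card.
rewrite (eq_bigr (fun T => (cov T == 0 : nat) + cov T)); last first.
  move=> T; rewrite inE => /andP[_ /eqP cT]; have := cov_le1 cT.
  by case: (cov T) => [|[|]].
rewrite big_split /=; congr (_ + _).
rewrite -card_sum; apply: eq_card => T; rewrite !inE subsetT andbT.
by [].
Qed.

Definition a (p : P) := #|[set A in C | p \in supp A]|.
Local Notation U := (UQ set0).

Lemma E0 : 'C(u * 2, 3) = #|U| + 4 * (#|C| + #|C|).
Proof.
have := main_eq (Q := set0); rewrite cards0 !subn0 => ->; last by [].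
by congr (_ + 4 * (_ + _)); apply: eq_card => A; rewrite !inE sub0set andbT.
Qed.

Lemma Ep p : 'C(u * 2 - 1, 2) = #|UQ [set p]| + 3 * (a p + a (sg p)).
Proof.
have := main_eq (Q := [set p]); rewrite cards1 => ->; last by [].
congr (_ + 3 * (_ + _)); apply: eq_card => A; by rewrite !inE sub1set !inE.
Qed.

Lemma EP p : 'C(u * 2 - 2, 1) = #|UQ [set p; sg p]|
   + 2 * (#|[set A in C | [set p; sg p] \subset supp A]| + #|[set A in C | [set p; sg p] \subset supp A]|).
Proof.
have c2 : #|[set p; sg p]| = 2 by rewrite cards2 eq_sym sg_neq.
have := main_eq (Q := [set p; sg p]); rewrite c2 => ->; last by [].
congr (_ + 2 * (_ + _)); apply: eq_card => A; rewrite !inE !subUset !sub1set !inE /= swK.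
by case: (A p.1 p.2); case: (A p.1 (sw p.2)); rewrite ?andbF ?andbT.
Qed.

Lemma Up_sub p : UQ [set p] \subset U.
Proof. apply/subsetP => T; rewrite !inE sub0set; by case/andP => /andP[_ ->] ->. Qed.

Lemma sumUp : \sum_p #|UQ [set p]| = 3 * #|U|.
Proof.
have e : forall p, #|UQ [set p]| = \sum_(T in U) (p \in T : nat).
  move=> p; rewrite -card_sum; apply: eq_card => T; rewrite !inE sub1set sub0set /=.
  by case: (p \in T); case: (#|T| == 3); case: (cov T == 0).
rewrite (eq_bigr _ (fun p _ => e p)) exchange_big /=.
rewrite (eq_bigr (fun _ => 3)); first by rewrite sum_nat_const mulnC.
move=> T; rewrite inE => /andP[/andP[_ /eqP cT] _].
by rewrite -cT -sum1_card [RHS]big_mkcond /=; apply: eq_bigr => i _; case: (i \in T).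
Qed.

Lemma U_ne4 : 3 %| 'C(u * 2 - 1, 2) -> 4 %| 'C(u * 2 - 2, 1) -> #|U| != 4.
Proof.
move=> d3 d4; apply/negP => /eqP cU.
have hp : forall p, #|UQ [set p]| = 0 \/ #|UQ [set p]| = 3.
  move=> p; have : 3 %| #|UQ [set p]|.
    by move: d3; rewrite (Ep p) dvdn_addl // dvdn_mulr.
  have := subset_leq_card (Up_sub p); rewrite cU.
  case: #|UQ [set p]| => [|[|[|[|[|m]]]]] //; by [left|right].
have sym : forall p, #|UQ [set sg p]| = #|UQ [set p]|.
  move=> p; have := Ep p; have := Ep (sg p); rewrite sgK => h1 h2.
  by apply/eqP; rewrite -(eqn_add2r (3 * (a p + a (sg p)))) -h2 h1 [a (sg p) + _]addnC.
set S := [set p | 0 < #|UQ [set p]|].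
have cS : #|S| = 4.
  have := sumUp; rewrite cU.
  rewrite (eq_bigr (fun p => 3 * (p \in S))); last first.
    move=> p _; rewrite inE; by case: (hp p) => ->.
  have sS : \sum_p (p \in S : nat) = #|S|.
    by rewrite -sum1_card [RHS]big_mkcond /=; apply: eq_bigr => i _; case: (i \in S).
  rewrite -big_distrr /= sS. by move=> /eqP; rewrite eqn_mul2l /= => /eqP.
have inS : forall T q, T \in U -> q \in T -> q \in S.
  move=> T q TU qT; rewrite inE card_gt0; apply/set0Pn; exists T.
  by move: TU; rewrite !inE sub1set qT sub0set.
have TS : forall T, T \in U -> T \subset S.
  by move=> T TU; apply/subsetP => q; exact: inS.
have : 0 < #|S| by rewrite cS.
rewrite card_gt0 => /set0Pn [p pS].
have c3 : #|UQ [set p]| = 3.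
  by move: pS; rewrite inE; case: (hp p) => ->.
have spS : sg p \in S by rewrite inE sym c3.
set V := [set T : {set P} | ([set p] \subset T) && (T \subset S) && (#|T| == 3)].
have cV : #|V| = 3.
  have e : #|S :\: [set p]| = 3 by rewrite cardsD (setIidPr _) ?cards1 ?cS // sub1set.
  have := @card_sup _ [set p] S 3; rewrite sub1set pS cards1 e => /(_ isT isT).
  by rewrite /V => ->.
have UpV : UQ [set p] =i V.
  apply/subset_cardP; first by rewrite c3 cV.
  apply/subsetP => T; rewrite !inE => /andP[/andP[pT cT] c0].
  rewrite pT cT andbT /=; apply: TS; by rewrite !inE sub0set cT c0.
set Pp := [set p; sg p].
have cPp : #|Pp| = 2 by rewrite cards2 eq_sym sg_neq.
have PpS : Pp \subset S by rewrite subUset !sub1set pS spS.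
set W := [set T : {set P} | (Pp \subset T) && (T \subset S) && (#|T| == 3)].
have cW : #|W| = 2.
  have e : #|S :\: Pp| = 2 by rewrite cardsD (setIidPr PpS) cPp cS.
  by rewrite card_sup ?cPp // e.
have : #|UQ Pp| = #|W|.
  apply: eq_card => T; rewrite !inE.
  apply/idP/idP.
    move=> /andP[/andP[PT cT] c0]; rewrite PT cT andbT /=; apply: TS.
    by rewrite !inE sub0set cT c0.
  move=> /andP[/andP[PT TS'] cT].
  have pT : [set p] \subset T.
    by apply: subset_trans PT; rewrite sub1set !inE eqxx.
  have : T \in V by rewrite !inE pT TS' cT.
  rewrite -UpV !inE => /andP[/andP[_ _] ->]; by rewrite PT cT.
rewrite cW => c2; move: d4; rewrite (EP p) -/Pp c2.
set x := #|[set A in C | Pp \subset supp A]|.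
have -> : 2 * (x + x) = 4 * x by lia.
by rewrite dvdn_addl // dvdn_mulr.
Qed.

End Main.

Lemma t3 n : n ^_ 3 = n * n.-1 * n.-2.
Proof. by rewrite !ffactnS ffactn0 muln1 mulnA. Qed.

Lemma arith7 k : let u := 12 * k + 7 in exists q, [/\ odd q, 'C(u * 2, 3) = 4 * q,
  (u * (((2 * u - 1) * ((2 * u - 2) %/ 2)) %/ 3)) = 2 * q,
  3 %| 'C(u * 2 - 1, 2) & 4 %| 'C(u * 2 - 2, 1)].
Proof.
move=> u; exists ((12*k+7)*(24*k+13)*(2*k+1)); split.
- rewrite !oddM !oddD; by case: (odd k).
- have h := bin_ffact (u * 2) 3; rewrite t3 in h.
  have f3 : 3`! = 6 by [].
  have e1 : (u*2).-1 = 24*k+13 by rewrite /u; lia.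
  have e2 : (u*2).-2 = 24*k+12 by rewrite /u; lia.
  rewrite f3 e2 e1 /u in h; rewrite /u; nia.
- have -> : (2 * u - 2) %/ 2 = 12 * k + 6 by rewrite /u; lia.
  have -> : 2 * u - 1 = 24 * k + 13 by rewrite /u; lia.
  have -> : (24 * k + 13) * (12 * k + 6) = 3 * ((24 * k + 13) * (4 * k + 2)) by nia.
  rewrite mulKn //; rewrite /u; nia.
- rewrite bin2.
  have -> : (u * 2 - 1) * (u * 2 - 1).-1 = ((24 * k + 13) * (12 * k + 6)).*2.
    by rewrite -muln2 /u; nia.
  rewrite doubleK; apply/dvdnP; exists ((24 * k + 13) * (4 * k + 2)); nia.
- rewrite bin1; apply/dvdnP; exists (6 * k + 3); rewrite /u; lia.
Qed.

Lemma arith11 k : let u := 12 * k + 11 in exists q, [/\ odd q, 'C(u * 2, 3) = 4 * q,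
  (u * (((2 * u - 1) * ((2 * u - 2) %/ 2)) %/ 3)) = 2 * q,
  3 %| 'C(u * 2 - 1, 2) & 4 %| 'C(u * 2 - 2, 1)].
Proof.
move=> u; exists ((12*k+11)*(8*k+7)*(6*k+5)); split.
- rewrite !oddM !oddD; by case: (odd k).
- have h := bin_ffact (u * 2) 3; rewrite t3 in h.
  have f3 : 3`! = 6 by [].
  have e1 : (u*2).-1 = 24*k+21 by rewrite /u; lia.
  have e2 : (u*2).-2 = 24*k+20 by rewrite /u; lia.
  rewrite f3 e2 e1 /u in h; rewrite /u; nia.
- have -> : (2 * u - 2) %/ 2 = 12 * k + 10 by rewrite /u; lia.
  have -> : 2 * u - 1 = 24 * k + 21 by rewrite /u; lia.
  have -> : (24 * k + 21) * (12 * k + 10) = 3 * ((8 * k + 7) * (12 * k + 10)) by nia.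
  rewrite mulKn //; rewrite /u; nia.
- rewrite bin2.
  have -> : (u * 2 - 1) * (u * 2 - 1).-1 = ((24 * k + 21) * (12 * k + 10)).*2.
    by rewrite -muln2 /u; nia.
  rewrite doubleK; apply/dvdnP; exists ((8 * k + 7) * (12 * k + 10)); nia.
- rewrite bin1; apply/dvdnP; exists (6 * k + 5); rewrite /u; lia.
Qed.

Lemma arith u : (u %% 12 == 7) || (u %% 12 == 11) -> exists q, [/\ odd q, 'C(u * 2, 3) = 4 * q,
  (u * (((2 * u - 1) * ((2 * u - 2) %/ 2)) %/ 3)) = 2 * q,
  3 %| 'C(u * 2 - 1, 2) & 4 %| 'C(u * 2 - 2, 1)].
Proof.
have E := divn_eq u 12; move: (u %/ 12) E => k E.
case/orP => /eqP h; rewrite h in E.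
  have -> : u = 12 * k + 7 by lia.
  exact: arith7.
have -> : u = 12 * k + 11 by lia.
exact: arith11.
Qed.

Theorem lemma5p6 (u : nat) (hu : (u %% 12 == 7) || (u %% 12 == 11)) :
  Phi u 2 4 2 <= (u * (((2 * u - 1) * ((2 * u - 2) %/ 2)) %/ 3)) %/ 4 - 1.
Proof.
have [q [oq hC hM d3 d4]] := arith hu.
rewrite hM /Phi; apply/bigmax_leqP => C HC.
have e0 := E0 HC.
have ne := U_ne4 HC d3 d4.
rewrite hC in e0.
have [r hr] : exists r, q = 2 * r + 1.
  exists q./2; have := odd_double_half q; rewrite oq -muln2; lia.
move: ne e0; set x := #|UQ C set0|; lia.
Qed.
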